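(* Consider the discrete-time linear control system on $\mathrm{Aff}(2,\mathbb{R})$ given by $(x_{k+1},y_{k+1})=f_{u_k}(x_k,y_k)$, $u_k\in U$, where $f_u(x,y)=(h(u)x,\ a(x-1)+dy+g(u)x)$ with $a\in\mathbb{R}$, $d\in\mathbb{R}\setminus\{0\}$, and $h:\mathbb{R}^m\to(0,\infty)$, $g:\mathbb{R}^m\to\mathbb{R}$ smooth with $h(0)=1$, $g(0)=0$, and $U\subset\mathbb{R}^m$ a compact convex neighborhood of $0$. If $h'(0)\neq0$, $-a\,h'(0)\neq g'(0)(d-1)$ and $d=1$, then the system is controllable.
   Context: $\mathrm{Aff}(2,\mathbb{R})$ is the set $(0,\infty)\times\mathbb{R}$ with product $(x_1,y_1)\cdot(x_2,y_2)=(x_1x_2,\ y_2+x_2y_1)$ and identity $(1,0)$. Controls are sequences $u=(u_i)_{i\in\mathbb{N}_0}\in U^{\mathbb{N}_0}$ and the solution is $\varphi(0,p,u)=p$, $\varphi(k,p,u)=f_{u_{k-1}}\circ\cdots\circ f_{u_0}(p)$. $h'(0)$ and $g'(0)$ denote the derivatives of $h$ and $g$ at $0$. The system is controllable if for all $p,q$ there are $k\in\mathbb{N}$ and a control $u$ with $\varphi(k,p,u)=q$. *)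

(* Defs.v *)
From HB Require Import structures.
From mathcomp Require Import all_boot all_order all_algebra.
From mathcomp Require Import all_classical all_reals all_analysis.
Set Implicit Arguments. Unset Strict Implicit. Unset Printing Implicit Defensive.
Import Order.TTheory GRing.Theory Num.Theory.
Import numFieldNormedType.Exports.
Local Open Scope classical_set_scope.
Local Open Scope ring_scope.

Section Defs.
Variable R : realType.
Variable m : nat.

Fixpoint iter_deriv (vs : seq 'rV[R]_m) (f : 'rV[R]_m -> R) : 'rV[R]_m -> R :=
  match vs with
  | [::] => f
  | v :: vs' => fun x => 'D_v (iter_deriv vs' f) x
  end.

Definition smooth (f : 'rV[R]_m -> R) : Prop :=
  forall (vs : seq 'rV[R]_m) (x : 'rV[R]_m), differentiable (iter_deriv vs f) x.

(* Aff(2,R) = (0,oo) x R *)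
Definition in_Aff2 (p : R * R) : Prop := 0 < p.1.

Definition f_sys (a d : R) (h g : 'rV[R]_m -> R) (u : 'rV[R]_m) (p : R * R) : R * R :=
  (h u * p.1, a * (p.1 - 1) + d * p.2 + g u * p.1).

Fixpoint phi (a d : R) (h g : 'rV[R]_m -> R) (k : nat) (p : R * R)
    (u : nat -> 'rV[R]_m) : R * R :=
  match k with
  | 0%N => p
  | k'.+1 => f_sys a d h g (u k') (phi a d h g k' p u)
  end.

Definition controllable (a d : R) (h g : 'rV[R]_m -> R) (U : set 'rV[R]_m) : Prop :=
  forall p q : R * R, in_Aff2 p -> in_Aff2 q ->
    exists (k : nat) (u : nat -> 'rV[R]_m),
      (0 < k)%N /\ (forall i, U (u i)) /\ phi a d h g k p u = q.

End Defs.

(* Main.v *)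
Require Import Defs.
From HB Require Import structures.
From mathcomp Require Import all_boot all_order all_algebra.
From mathcomp Require Import all_classical all_reals all_analysis.
From mathcomp Require Import ring lra.
Import Order.TTheory GRing.Theory Num.Theory.
Import numFieldNormedType.Exports.
Local Open Scope classical_set_scope.
Local Open Scope ring_scope.
Set Implicit Arguments. Unset Strict Implicit. Unset Printing Implicit Defensive.


Definition Reach (R : realType) (m : nat) (a d : R) (h g : 'rV[R]_m -> R)
  (U : set 'rV[R]_m) (p q : R * R) : Prop :=
  exists (k : nat) (u : nat -> 'rV[R]_m), (forall i, U (u i)) /\ phi a d h g k p u = q.

Lemma phi_ext (R : realType) (m : nat) (a d : R) (h g : 'rV[R]_m -> R) k p u u' :
  (forall i, (i < k)%N -> u i = u' i) -> phi a d h g k p u = phi a d h g k p u'.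
Proof.
elim: k => [//|k IH] E /=; rewrite E // IH // => i ik; apply: E; exact: ltnW.
Qed.

Lemma phi_cat (R : realType) (m : nat) (a d : R) (h g : 'rV[R]_m -> R) k1 k2 p u1 u2 :
  phi a d h g (k1 + k2) p (fun i => if (i < k1)%N then u1 i else u2 (i - k1)%N)
  = phi a d h g k2 (phi a d h g k1 p u1) u2.
Proof.
elim: k2 => [|k2 IH].
  rewrite addn0; apply: phi_ext => i -> //.
rewrite addnS /= IH; congr f_sys.
by rewrite ltnNge leq_addr /= addKn.
Qed.

Lemma Reach_trans (R : realType) (m : nat) (a d : R) (h g : 'rV[R]_m -> R) U p q r :
  Reach a d h g U p q -> Reach a d h g U q r -> Reach a d h g U p r.
Proof.
move=> [k1 [u1 [U1 E1]]] [k2 [u2 [U2 E2]]].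
exists (k1 + k2)%N, (fun i => if (i < k1)%N then u1 i else u2 (i - k1)%N); split.
  by move=> i; case: ifP.
by rewrite phi_cat E1.
Qed.

Lemma Reach_refl (R : realType) (m : nat) (a d : R) (h g : 'rV[R]_m -> R) U p :
  U 0 -> Reach a d h g U p p.
Proof. by move=> U0; exists 0%N, (fun _ => 0). Qed.

Lemma Reach_step1 (R : realType) (m : nat) (a d : R) (h g : 'rV[R]_m -> R) U p u :
  U u -> Reach a d h g U p (f_sys a d h g u p).
Proof. by move=> Uu; exists 1%N, (fun _ => u). Qed.

Lemma Reach_eq (R : realType) (m : nat) (a d : R) (h g : 'rV[R]_m -> R) U p q q' :
  Reach a d h g U p q -> q = q' -> Reach a d h g U p q'.
Proof. by move=> ? <-. Qed.


Lemma step_c (R : realType) (m : nat) (a : R) (h g : 'rV[R]_m -> R) U (w : 'rV[R]_m) x y :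
  U w -> Reach a 1 h g U (x,y) (h w * x, y + a*(x-1) + g w * x).
Proof.
move=> Uw; apply: Reach_eq (Reach_step1 _ _ _ _ (x,y) Uw) _.
rewrite /f_sys /=; congr pair; ring.
Qed.

Lemma rest_n (R : realType) (m : nat) (a : R) (h g : 'rV[R]_m -> R) U :
  U 0 -> h 0 = 1 -> g 0 = 0 -> forall n x y,
  Reach a 1 h g U (x,y) (x, y + n%:R * (a*(x-1))).
Proof.
move=> U0 h0 g0; elim=> [|n IH] x y.
  by apply: Reach_eq (Reach_refl _ _ _ _ (x,y) U0) _; rewrite mul0r addr0.
apply: Reach_trans (IH x y) _; apply: Reach_eq (step_c _ _ _ _ _ U0) _.
rewrite h0 g0 mul1r; congr pair; rewrite -natr1; ring.
Qed.

Lemma xphase (R : realType) (m : nat) (a : R) (h g : 'rV[R]_m -> R) U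
  (psi : R -> 'rV[R]_m) (c1 : R) :
  U 0 -> 1 < c1 ->
  (forall c, c1^-1 <= c <= c1 -> U (psi c) /\ h (psi c) = c) ->
  forall n x0 r, 0 < x0 -> c1^-1 ^+ n <= r <= c1 ^+ n ->
  exists E, forall y, Reach a 1 h g U (x0,y) (r*x0, y+E).
Proof.
move=> U0 c11 Hpsi; elim=> [|n IH] x0 r x0p /andP[r1 r2].
  exists 0 => y; have -> : r = 1 by move: r1 r2; rewrite !expr0; lra.
  by apply: Reach_eq (Reach_refl _ _ _ _ _ U0) _; rewrite mul1r addr0.
have c1p : 0 < c1 by lra.
have c1n : 0 < c1 ^+ n by rewrite exprn_gt0.
have c2p : 0 < c1^-1 by rewrite invr_gt0.
have c2n : 0 < c1^-1 ^+ n by rewrite exprn_gt0.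
have c21 : c1^-1 <= c1 by apply: (le_trans _ (ltW c11)); rewrite invf_le1 // ltW.
have rp : 0 < r by apply: lt_le_trans r1; rewrite exprn_gt0.
have c2c1n : c1^-1 ^+ n <= c1 ^+ n by rewrite lerXn2r // ?ltW // nnegrE ltW.
have [c [cp [Hc Hr]]] : exists c, 0 < c /\ c1^-1 <= c <= c1 /\ c1^-1 ^+ n <= r / c <= c1 ^+ n.
  case: (leP c1^-1 (r / c1 ^+ n)) => H.
    have cp : 0 < r / c1 ^+ n by rewrite divr_gt0.
    exists (r / c1 ^+ n); split => //; split.
      by rewrite H /= ler_pdivrMr //; move: r2; rewrite exprS.
    rewrite invf_div mulrCA divff ?gt_eqF // mulr1 lexx andbT.
    exact: c2c1n.
  exists c1^-1; split => //; split; first by rewrite lexx c21.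
  have Xc : c1^-1 * c1 = 1 by rewrite mulVf ?gt_eqF.
  move: H; rewrite ltr_pdivrMr // invrK => H.
  move: r1; rewrite exprSr => r1'.
  move: c2n c1n c1p Xc r1' H; set X := c1^-1; set Y := c1 ^+ n; set Z := X ^+ n.
  move=> c2n' c1n' c1p' Xc' r1' H'.
  apply/andP; split; nra.
have [Uc hc] := Hpsi c Hc.
have [E HE] := IH (c * x0) (r / c) (mulr_gt0 cp x0p) Hr.
exists (a * (x0 - 1) + g (psi c) * x0 + E) => y.
apply: Reach_trans (step_c _ _ _ _ _ Uc) _; rewrite hc.
apply: Reach_eq (HE _) _; congr pair.
  by rewrite mulrA divfK // gt_eqF.
ring.
Qed.


Lemma loop_c (R : realType) (m : nat) (a : R) (h g : 'rV[R]_m -> R) U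
  (psi : R -> 'rV[R]_m) (c : R) n y :
  U 0 -> h 0 = 1 -> g 0 = 0 -> c != 0 ->
  U (psi c) -> h (psi c) = c -> U (psi c^-1) -> h (psi c^-1) = c^-1 ->
  Reach a 1 h g U (1,y) (1, y + (g (psi c) + n%:R * (a * (c - 1)) + a * (c - 1)
       + g (psi c^-1) * c)).
Proof.
move=> U0 h0 g0 c0 U1 h1 U2 h2.
eapply Reach_trans; first exact: (step_c a h g 1 y U1).
rewrite h1.
eapply Reach_trans; first exact: (rest_n a U0 h0 g0 n).
eapply Reach_eq; first exact: (step_c a h g _ _ U2).
rewrite h2; congr pair.
  by rewrite mulr1 mulVf.
ring.
Qed.

Lemma bernoulli (R : realType) (c : R) n : 1 < c -> 1 + n%:R * (c - 1) <= c ^+ n.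
Proof.
move=> c1; elim: n => [|n IH]; first by rewrite mul0r addr0 expr0.
have n0 : 0 <= n%:R :> R by [].
have h1 : 0 <= n%:R * ((c-1)*(c-1)) by rewrite mulr_ge0 // mulr_ge0 //; lra.
have h2 : 0 <= c * (c ^+ n - (1 + n%:R * (c - 1))) by rewrite mulr_ge0 //; lra.
rewrite exprS -natr1; nra.
Qed.

Lemma pow_bound (R : realType) (c1 r : R) : 1 < c1 -> 0 < r ->
  exists n, c1^-1 ^+ n <= r <= c1 ^+ n.
Proof.
move=> c11 rp.
have e0 : 0 < c1 - 1 by lra.
set X := (r + r^-1) / (c1 - 1).
have rip : 0 < r^-1 by rewrite invr_gt0.
have Xp : 0 <= X by rewrite divr_ge0 // ltW // addr_gt0.
exists (Num.truncn X).+1.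
have Hn := Num.Theory.truncnS_gt X.
have HX : r + r^-1 < (Num.truncn X).+1%:R * (c1 - 1) by rewrite -ltr_pdivrMr.
have B := bernoulli (Num.truncn X).+1 c11.
have c1n : 0 < c1 ^+ (Num.truncn X).+1 by rewrite exprn_gt0 //; lra.
apply/andP; split; last by lra.
rewrite exprVn -[X in _ <= X]invrK lef_pV2 ?posrE ?invr_gt0 //; lra.
Qed.


Lemma core (R : realType) (m : nat) (a : R) (h g : 'rV[R]_m -> R) U
  (psi : R -> 'rV[R]_m) (c1 : R) :
  a != 0 -> U 0 -> h 0 = 1 -> g 0 = 0 -> 1 < c1 ->
  (forall c, c1^-1 <= c <= c1 -> U (psi c) /\ h (psi c) = c) ->
  (forall c, c1^-1 <= c <= c1 -> {for c, continuous (g \o psi)}) ->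
  forall p q, in_Aff2 p -> in_Aff2 q -> Reach a 1 h g U p q.
Proof.
move=> a0 U0 h0 g0 c11 Hpsi Hcont [xp yp] [xq yq]; rewrite /in_Aff2 /= => xpp xqp.
have c1p : 0 < c1 by lra.
have c2p : 0 < c1^-1 by rewrite invr_gt0.
have c21 : c1^-1 < 1 by rewrite invf_lt1.
set c2 := c1^-1.
have inv_in : forall c, c2 <= c <= c1 -> c2 <= c^-1 <= c1.
  move=> c /andP[l r]; have cp : 0 < c by exact: lt_le_trans c2p l.
  apply/andP; split; first by rewrite /c2 lef_pV2 ?posrE.
  by rewrite -[X in _ <= X]invrK lef_pV2 ?posrE ?invr_gt0.
have xip : 0 < xp^-1 by rewrite invr_gt0.
have [n1 Hn1] := pow_bound c11 xip.
have [E1 HE1] := xphase a g U0 c11 Hpsi xpp Hn1.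
have [n2 Hn2] := pow_bound c11 xqp.
have [E2 HE2] := xphase a g U0 c11 Hpsi ltr01 Hn2.
set D := yq - yp - E1 - E2.
set L := fun (n : nat) (c : R) => g (psi c) + n%:R * (a * (c - 1)) + a * (c - 1)
       + g (psi c^-1) * c.
suff [n [c Hc Lc]] : exists n, exists2 c, c2 <= c <= c1 & L n c = D.
  have [Uc hc] := Hpsi c Hc.
  have [Uc' hc'] := Hpsi _ (inv_in c Hc).
  have c0 : c != 0 by move: Hc => /andP[l _]; rewrite gt_eqF // (lt_le_trans c2p l).
  eapply Reach_trans; first exact: (HE1 yp).
  rewrite mulVf ?gt_eqF //.
  have LL := @loop_c R m a h g U psi c n (yp + E1) U0 h0 g0 c0 Uc hc Uc' hc'.
  eapply Reach_trans; first exact: LL.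
  eapply Reach_eq; first exact: (HE2 _).
  rewrite mulr1; congr pair; move: Lc; rewrite /L /D => ->; ring.
have Lsplit : forall n c, L n c = L 0%N c + n%:R * (a * (c - 1)).
  by move=> n c; rewrite /L mul0r addr0; ring.
have c2c1 : c2 <= c1 by rewrite /c2; lra.
have Lcont : forall n c, c2 <= c <= c1 -> {for c, continuous (L n)}.
  move=> n c Hc.
  have c0 : c != 0 by move: Hc => /andP[l _]; rewrite gt_eqF // (lt_le_trans c2p l).
  have G1 := Hcont c Hc.
  have G2 : {for c, continuous ((g \o psi) \o (@GRing.inv R))}.
    apply: continuous_comp; first exact: inv_continuous.
    exact: Hcont _ (inv_in c Hc).
  apply: cvgD; [apply: cvgD; [apply: cvgD|]|].
  - exact: G1.
  - apply: cvgM; first exact: cvg_cst.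
    apply: cvgM; first exact: cvg_cst.
    apply: cvgB; [exact: cvg_id | exact: cvg_cst].
  - apply: cvgM; first exact: cvg_cst.
    apply: cvgB; [exact: cvg_id | exact: cvg_cst].
  - apply: cvgM; [exact: G2 | exact: cvg_id].
set M := `|D| + `|L 0%N c1| + `|L 0%N c2|.
set dl := Num.min (c1 - 1) (1 - c2).
have dl1 : dl <= c1 - 1 by rewrite /dl ge_min lexx.
have dl2 : dl <= 1 - c2 by rewrite /dl ge_min lexx orbT.
have dlp : 0 < dl by rewrite /dl lt_min; apply/andP; split; rewrite subr_gt0.
have Ap : 0 < `|a| by rewrite normr_gt0.
have Mp : 0 <= M by rewrite /M !addr_ge0.
set X := (M + M) / (`|a| * dl).
have Adp : 0 < `|a| * dl by rewrite mulr_gt0.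
set n := (Num.truncn X).+1.
have HX : M + M < n%:R * (`|a| * dl) by rewrite -ltr_pdivrMr // Num.Theory.truncnS_gt.
have N0 : 0 <= n%:R :> R by [].
have nn1 := normr_ge0 D; have nn2 := normr_ge0 (L 0%N c1); have nn3 := normr_ge0 (L 0%N c2).
have HD : `|D| <= M by rewrite /M; lra.
have HK1 : `|L 0%N c1| <= M by rewrite /M; lra.
have HK2 : `|L 0%N c2| <= M by rewrite /M; lra.
have NA : 0 <= n%:R * `|a| by rewrite mulr_ge0.
have h1 : n%:R * `|a| * dl <= n%:R * `|a| * (c1 - 1) by rewrite ler_wpM2l.
have h2 : n%:R * `|a| * dl <= n%:R * `|a| * (1 - c2) by rewrite ler_wpM2l.
have e1 := Lsplit n c1; have e2 := Lsplit n c2.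
have Hmid : Num.min (L n c2) (L n c1) <= D <= Num.max (L n c2) (L n c1).
  move: HD HK1 HK2 => /ler_normlP[HD1 HD2] /ler_normlP[HK11 HK12] /ler_normlP[HK21 HK22].
  case: (ltrgtP a 0) => [an|ap|/eqP]; last by rewrite (negbTE a0).
    rewrite ltr0_norm // in h1 h2 HX NA.
    have lo : L n c1 <= D by nra.
    have hi : D <= L n c2 by nra.
    by rewrite ge_min le_max lo hi orbT.
  rewrite gtr0_norm // in h1 h2 HX NA.
  have lo : L n c2 <= D by nra.
  have hi : D <= L n c1 by nra.
  by rewrite ge_min le_max lo hi orbT.
have Lc' : {within `[c2, c1], continuous (L n)}.
  apply: continuous_in_subspaceT => x /set_mem /=; rewrite in_itv /= => hx.
  exact: Lcont.
have [c Hc Lc] := IVT c2c1 Lc' Hmid.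
by exists n, c => //; rewrite in_itv /= in Hc.
Qed.

Lemma line_derivable (R : realType) (m : nat) (h : 'rV[R]_m -> R) (w : 'rV[R]_m) (t : R) :
  differentiable h (t *: w) ->
  derivable (fun s : R => h (s *: w)) t 1 /\
  'D_1 (fun s : R => h (s *: w)) t = 'D_w h (t *: w).
Proof.
move=> dh; have := @diff_derivable _ _ _ _ _ w dh.
rewrite /derivable /derive.
have -> : (fun s : R => s^-1 *: (h ((s *: (1:R) + t) *: w) - h (t *: w)))
  = (fun s : R => s^-1 *: (h (s *: w + t *: w) - h (t *: w))).
  by apply: funext => s; rewrite scalerDl [s *: 1]mulr1.
by [].
Qed.

Lemma analytic (R : realType) (m : nat) (h g : 'rV[R]_m -> R) (U : set 'rV[R]_m) :
  (forall u, 0 < h u) -> smooth h -> smooth g -> h 0 = 1 -> nbhs (0 : 'rV[R]_m) U ->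
  ('d h 0 : 'rV[R]_m -> R) <> (fun _ => 0) ->
  exists (psi : R -> 'rV[R]_m) (c1 : R), 1 < c1 /\
    (forall c, c1^-1 <= c <= c1 -> U (psi c) /\ h (psi c) = c) /\
    (forall c, c1^-1 <= c <= c1 -> {for c, continuous (g \o psi)}).
Proof.
move=> hpos sh sg h0 HU hd0.
have dh : forall x, differentiable h x := fun x => sh [::] x.
have dg : forall x, differentiable g x := fun x => sg [::] x.
have [v hv] : exists v, 'd h 0 v != 0.
  apply/not_existsP => H; apply: hd0; apply: funext => v.
  by have /negP := H v; rewrite negbK => /eqP.
set w := if 0 < 'd h 0 v then v else -v.
have wpos : 0 < 'd h 0 w.
  rewrite /w; case: ifP => // /negbT; rewrite -leNgt => le.
  by rewrite linearN oppr_gt0 lt_neqAle hv le.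
have dDw : forall x, differentiable ('D_w h) x := fun x => sh [:: w] x.
set phi := fun t : R => h (t *: w).
set dphi := fun t : R => 'D_w h (t *: w).
have phider : forall t, derivable phi t 1 /\ 'D_1 phi t = dphi t.
  by move=> t; apply: line_derivable.
have phicont : continuous phi.
  move=> t; apply: continuous_comp; first exact: scalel_continuous.
  exact: differentiable_continuous.
have dphicont : continuous dphi.
  move=> t; apply: (@continuous_comp _ _ _ (fun t : R => t *: w) (fun x => 'D_w h x)).
    exact: scalel_continuous.
  exact: differentiable_continuous.
have dphi0 : dphi 0 = 'd h 0 w by rewrite /dphi scale0r deriveE.
have phi0 : phi 0 = 1 by rewrite /phi scale0r.
have N1 : \forall t \near (0:R), 0 < dphi t.
  have := dphicont 0; move=> /cvgr_gt /(_ 0); rewrite dphi0 => /(_ wpos).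
  by [].
have N2 : \forall t \near (0:R), U (t *: w).
  have H := @scalel_continuous _ _ w 0.
  have HU' : nbhs ((fun k : R => k *: w) 0) U by rewrite /= scale0r.
  exact: H _ HU'.
have [e e0 He] : exists2 e, 0 < e & forall t, `|t| < e -> 0 < dphi t /\ U (t *: w).
  have H12 : nbhs (0:R) ((fun t : R => 0 < dphi t) `&` (fun t : R => U (t *: w))) by apply: filterI.
  have [e e0 He] := (nbhs_ballP _ _).1 H12.
  exists e => // t te; apply: He; rewrite /ball /= sub0r normrN //.
set tau := e / 2.
have taup : 0 < tau by rewrite divr_gt0.
have taue : tau < e by rewrite /tau; lra.
have inc : forall x y, -tau <= x -> x < y -> y <= tau -> phi x < phi y.
  apply: gtr0_derive1_incr.
  - by move=> x _; exact: (phider x).1.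
  - move=> x; rewrite in_itv /= => /andP[l r]; rewrite derive1E (phider x).2.
    by apply: (He x _).1; rewrite ltr_norml; apply/andP; split; lra.
  - exact: continuous_subspaceT.
have incw : forall x y, -tau <= x -> x <= y -> y <= tau -> phi x <= phi y.
  move=> x y l xy r; case: (ltrgtP x y) => [xy'|yx|->//].
    by apply: ltW; apply: inc.
  by lra.
have inj : forall x y, -tau <= x <= tau -> -tau <= y <= tau -> phi x = phi y -> x = y.
  move=> x y /andP[xl xr] /andP[yl yr] E; case: (ltrgtP x y) => // H.
    by have := inc x y xl H yr; rewrite E ltxx.
  by have := inc y x yl H xr; rewrite E ltxx.
set alpha := phi (-tau); set beta := phi tau.
have al1 : alpha < 1 by rewrite -phi0 /alpha; apply: inc; lra.
have be1 : 1 < beta by rewrite -phi0 /beta; apply: inc; lra.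
have alp : 0 < alpha by apply: hpos.
set ginv := fun c => xget 0 [set t | -tau <= t <= tau /\ phi t = c].
have ginvP : forall c, alpha <= c <= beta -> -tau <= ginv c <= tau /\ phi (ginv c) = c.
  move=> c hc; apply: (@xgetPex _ 0 [set t | -tau <= t <= tau /\ phi t = c]).
  have ab : alpha <= beta by lra.
  have phiw : {within `[-tau, tau], continuous phi} by exact: continuous_subspaceT.
  have := @IVT R phi (-tau) tau c _ phiw.
  rewrite (min_idPl ab) (max_idPr ab) => /(_ _ hc) [|t ht pt]; first lra.
  by exists t; split => //; rewrite in_itv /= in ht.
have ali : 1 < alpha^-1 by rewrite invf_gt1 // al1 alp.
set c1 := Num.min ((1 + beta) / 2) ((1 + alpha^-1) / 2).
have c1a : c1 < beta by rewrite /c1 gt_min; apply/orP; left; lra.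
have c1b : c1 < alpha^-1 by rewrite /c1 gt_min; apply/orP; right; lra.
have c11 : 1 < c1 by rewrite /c1 lt_min; apply/andP; split; lra.
have c1p : 0 < c1 by lra.
have c2a : alpha < c1^-1.
  by rewrite -[alpha]invrK ltf_pV2 ?posrE ?invr_gt0.
have c2p : 0 < c1^-1 by rewrite invr_gt0.
have inrange : forall c, c1^-1 <= c <= c1 -> alpha < c < beta.
  move=> c /andP[l r]; apply/andP; split; [exact: lt_le_trans c2a l|exact: le_lt_trans r c1a].
exists (fun c => ginv c *: w), c1; split => //; split.
  move=> c /inrange /andP[l r].
  have hc : alpha <= c <= beta by rewrite !ltW.
  have [/andP[gl gr] pg] := ginvP c hc.
  split => //; apply: (He _ _).2; rewrite ltr_norml; apply/andP; split; lra.
move=> c /inrange /andP[l r].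
have hc : alpha <= c <= beta by rewrite !ltW.
have [/andP[gl gr] pg] := ginvP c hc.
set t0 := ginv c in gl gr pg *.
have t0l : -tau < t0.
  rewrite lt_neqAle gl andbT; apply/negP => /eqP E.
  by move: l; rewrite -pg -E ltxx.
have t0r : t0 < tau.
  rewrite lt_neqAle gr andbT; apply/negP => /eqP E.
  by move: r; rewrite -pg E ltxx.
have K : {near t0, cancel phi ginv}.
  have : t0 \in `]-tau, tau[ by rewrite in_itv /= t0l t0r.
  move=> /near_in_itvoo; apply: filterS => z; rewrite in_itv /= => /andP[zl zr].
  have hz : alpha <= phi z <= beta by rewrite !incw //; lra.
  have [gz pz] := ginvP _ hz.
  by apply: inj => //; apply/andP; split; lra.
have Cg : {for c, continuous ginv}.
  rewrite -pg; apply: nbhs_singleton (near_can_continuous K _).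
  by near=> y; apply: phicont.
apply: (@continuous_comp _ _ _ ginv (fun x => g (x *: w))) => //.
apply: (@continuous_comp _ _ _ (fun x : R => x *: w) g).
  exact: scalel_continuous.
exact: differentiable_continuous.
Unshelve. all: by end_near.
Qed.

Unset Implicit Arguments.

Theorem theorem3p9 (R : realType) (m : nat) (a d : R)
  (h g : 'rV[R]_m -> R) (U : set 'rV[R]_m) :
  d != 0 ->
  (forall u, 0 < h u) ->
  smooth h -> smooth g ->
  h 0 = 1 -> g 0 = 0 ->
  compact U -> convex_set U -> nbhs (0 : 'rV[R]_m) U ->
  ('d h 0 : 'rV[R]_m -> R) <> (fun _ => 0) ->
  (fun v : 'rV[R]_m => - a * 'd h 0 v) <> (fun v => 'd g 0 v * (d - 1)) ->
  d = 1 ->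
  controllable a d h g U.
Proof.
move=> _ hpos sh sg h0 g0 _ _ HU hd0 hneq d1; subst d.
have a0 : a != 0.
  apply/eqP => a0; apply: hneq; apply: funext => v.
  by rewrite a0 oppr0 mul0r subrr mulr0.
have U0 : U 0 := nbhs_singleton HU.
have [psi [c1 [c11 [Hpsi Hcont]]]] := analytic hpos sh sg h0 HU hd0.
have HR := core a0 U0 h0 g0 c11 Hpsi Hcont.
move=> p q hp hq.
set p' := f_sys a 1 h g 0 p.
have hp' : in_Aff2 p' by rewrite /in_Aff2 /p' /= h0 mul1r.
have [k2 [u2 [U2 E2]]] := HR p' q hp' hq.
exists (1 + k2)%N, (fun i => if (i < 1)%N then 0 else u2 (i - 1)%N); split => //.
split; first by move=> i; case: ifP.
by rewrite phi_cat.
Qed.
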